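(* Let $\mathcal G$ be a Petri game with one system player whose underlying net is finite and bounded. If Player~0 has a winning strategy in $\mathit{Graph}(\mathcal G)$, then Player~0 has a winning strategy in $\mathit{Graph}'(\mathcal G)$.
   Context: Petri nets. A Petri net is a tuple $\mathcal N=(\mathcal P,\mathcal T,\mathcal F,\mathit{In})$ where the set of places $\mathcal P$ and the set of transitions $\mathcal T$ are disjoint, the flow relation $\mathcal F$ is a multiset over $(\mathcal P\times\mathcal T)\cup(\mathcal T\times\mathcal P)$, and the initial marking $\mathit{In}$ is a finite multiset over $\mathcal P$. For a node $x$, the precondition ${}^\bullet x$ is the multiset with ${}^\bullet x(y)=\mathcal F(y,x)$ and the postcondition $x^\bullet$ is the multiset with $x^\bullet(y)=\mathcal F(x,y)$; every transition $t$ must satisfy $0<|{}^\bullet t|<\infty$ and $0<|t^\bullet|<\infty$. A marking is a finite multiset over $\mathcal P$. A transition $t$ is enabled in a marking $M$ if ${}^\bullet t\subseteq M$ (multiset inclusion); firing it yields $M'=M-{}^\bullet t+t^\bullet$, written $M\xrightarrow{t}M'$. A marking is reachable if it is obtained from $\mathit{In}$ by firing a finite sequence of transitions; $\mathcal R(\mathcal N)$ denotes the set of reachable markings. $\mathcal N$ is finite if $\mathcal P\cup\mathcal T$ is finite, $k$-bounded if $M(p)\le k$ for all $M\in\mathcal R(\mathcal N)$ and places $p$, bounded if $k$-bounded for some $k$. Multiset difference is truncated at $0$; $+$ is multiset sum. Petri games. A Petri game is $\mathcal G=(\mathcal P_S,\mathcal P_E,\mathcal T,\mathcal F,\mathit{In},\mathcal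 B)$ where $\mathcal P_S$ (system places) and $\mathcal P_E$ (environment places) are disjoint, $\mathcal N=(\mathcal P_S\cup\mathcal P_E,\mathcal T,\mathcal F,\mathit{In})$ is a finite Petri net (the underlying net) and $\mathcal B$ is a set of markings (bad markings). A transition $t$ is purely environmental if ${}^\bullet t\subseteq\mathcal P_E$, otherwise it is a system transition. $\mathcal G$ has one system player if every $M\in\mathcal R(\mathcal N)$ contains exactly one token on system places; that place is denoted $s_M$, and $s_M^\bullet$ is the set of transitions having $s_M$ in their precondition. Graph games. A graph game $(\mathcal V_0,\mathcal V_1,\mathcal I,\mathcal E,\mathcal X)$ has disjoint vertex sets $\mathcal V_0,\mathcal V_1$ (of Players 0 and 1), initial vertex $\mathcal I$, edge relation $\mathcal E$ and bad vertices $\mathcal X$. A play is a maximal (finite or infinite) sequence $v_0v_1\dots$ with $v_0=\mathcal I$ and $(v_i,v_{i+1})\in\mathcal E$; it is won by Player~0 if no $v_i\in\mathcal X$. A strategy for Player~0 is a vertex-labeled tree whose root is labeled $\mathcal I$, where a node labeled with a $\mathcal V_1$ vertex has one child for each successor vertex and a node labeled with a $\mathcal V_0$ vertex having a successor has exactly one child labeled with one successor; it is winning if all maximal paths are labeled with plays won by Player~0. The game $\mathit{Graph}(\mathcal G)$: $\mathcal V_0=\{(M,\top)\mid M\in\mathcal R(\mathcal N)\}$, $\mathcal V_1=\{(M,c)\mid M\in\mathcal R(\mathcal N),\,c\subseteq s_M^\bullet\}$, $\mathcal I=(\mathit{In},\top)$. Edges: (E1) $(M,\top)\to(M,c)$ for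 every $c\subseteq s_M^\bullet$; (E2) $(M,c)\to(M',c)$ whenever some purely environmental $\mathbf t$ satisfies $M\xrightarrow{\mathbf t}M'$; (E3) $(M,c)\to(M',\top)$ whenever some system transition $\mathbf t\in c$ satisfies $M\xrightarrow{\mathbf t}M'$. Bad vertices: all $(M,c)\in\mathcal V_1$ such that (X1) $M\in\mathcal B$; or (X2a) two distinct transitions of $c$ are enabled in $M$; or (X2b) some $\mathbf t\in c$ is enabled in $M$ and $0<{}^\bullet\mathbf t(p)<M(p)$ for some place $p$; or (X3) some transition is enabled in $M$, every transition enabled in $M$ is a system transition, and no transition enabled in $M$ lies in $c$. The game $\mathit{Graph}'(\mathcal G)$: $\mathcal V'_0=\{(M,\top,\{s_M\})\mid M\in\mathcal R(\mathcal N)\}$, $\mathcal V'_1=\{(M,c,R)\mid M\in\mathcal R(\mathcal N),\,c\subseteq s_M^\bullet,\,R$ a multiset with $s_M\in R\subseteq M\}$, $\mathcal I'=(\mathit{In},\top,\{s_{\mathit{In}}\})$. Edges: (E'1) $(M,\top,\{s_M\})\to(M,c,\{s_M\})$ for every $c\subseteq s_M^\bullet$; (E'2) $(M,c,R)\to(M',c,R')$ whenever some purely environmental $\mathbf t$ satisfies $M\xrightarrow{\mathbf t}M'$ and $R'=R-{}^\bullet\mathbf t+\{o\}$ for some place $o\in\mathbf t^\bullet$; (E'3) $(M,c,R)\to(M',\top,\{s_{M'}\})$ whenever some system transition $\mathbf t\in c$ satisfies $M\xrightarrow{\mathbf t}M'$ and $R\subseteq{}^\bullet\mathbf t$. Bad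 vertices: all $(M,c,R)\in\mathcal V'_1$ such that $(M,c)$ satisfies one of the conditions (X1), (X2a), (X2b), (X3) above. *)

(* Defs.v *)
From mathcomp Require Import all_boot.
Set Implicit Arguments. Unset Strict Implicit. Unset Printing Implicit Defensive.

Definition marking (P : finType) := {ffun P -> nat}.

Definition msubset (P : finType) (A B : marking P) : bool := [forall p, A p <= B p].
Definition madd (P : finType) (A B : marking P) : marking P := [ffun p => A p + B p].
(* truncated difference *)
Definition mdiff (P : finType) (A B : marking P) : marking P := [ffun p => A p - B p].
Definition msingle (P : finType) (o : P) : marking P := [ffun p => if p == o then 1 else 0].
Definition msize (P : finType) (A : marking P) : nat := \sum_p A p.

Record petri_game (P T : finType) := PetriGame {
  sysp : pred P;
  pre : T -> marking P;
  post : T -> marking P;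
  init_mk : marking P;
  bad_mk : marking P -> Prop
}.

Section PetriGames.
Variables (P T : finType) (G : petri_game P T).

Definition valid_transitions : Prop :=
  forall t, 0 < msize (pre G t) /\ 0 < msize (post G t).

Definition enabled (t : T) (M : marking P) : bool := msubset (pre G t) M.
Definition fire (M : marking P) (t : T) : marking P := madd (mdiff M (pre G t)) (post G t).

Inductive reachable : marking P -> Prop :=
| reach_init : reachable (init_mk G)
| reach_step M t : reachable M -> enabled t M -> reachable (fire M t).

Definition bounded : Prop :=
  exists k, forall M, reachable M -> forall p, M p <= k.

Definition one_system_player : Prop :=
  forall M, reachable M -> \sum_(p | sysp G p) M p = 1.

Definition purely_env (t : T) : bool := [forall p, (0 < pre G t p) ==> ~~ sysp G p].
Definition system_tr (t : T) : bool := ~~ purely_env t.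

(* s_M : the system place carrying a token (unique for reachable M
   under one_system_player) *)
Definition sM (M : marking P) : option P := [pick p | sysp G p && (0 < M p)].
Definition sMset (M : marking P) : marking P :=
  [ffun p => if sM M == Some p then 1 else 0].
Definition postS (M : marking P) : {set T} :=
  [set t | if sM M is Some s then 0 < pre G t s else false].

Definition bad_cond (M : marking P) (c : {set T}) : Prop :=
  bad_mk G M
  \/ (exists t1 t2, [/\ t1 \in c, t2 \in c, t1 != t2, enabled t1 M & enabled t2 M])
  \/ (exists t, [/\ t \in c, enabled t M & exists p, 0 < pre G t p < M p])
  \/ [/\ (exists t, enabled t M),
         (forall t, enabled t M -> system_tr t) &
         (forall t, enabled t M -> t \notin c)].
End PetriGames.

(* Graph games over a carrier type V (vertices are those in V0 or V1). *)
Record graph_game (V : Type) := GraphGame {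
  gV0 : V -> Prop;
  gV1 : V -> Prop;
  gI : V;
  gE : V -> V -> Prop;
  gX : V -> Prop
}.

Section GraphGames.
Variables (V : Type) (GG : graph_game V).

(* A finite sequence I :: s is a play: consecutive edges and maximal. *)
Definition fin_play (s : seq V) : Prop :=
  (forall i, i < size s -> gE GG (nth (gI GG) (gI GG :: s) i) (nth (gI GG) s i))
  /\ (forall w, ~ gE GG (last (gI GG) s) w).
Definition inf_play (f : nat -> V) : Prop :=
  f 0 = gI GG /\ forall n, gE GG (f n) (f n.+1).
Definition fin_play_won (s : seq V) : Prop :=
  fin_play s /\ forall i, i <= size s -> ~ gX GG (nth (gI GG) (gI GG :: s) i).
Definition inf_play_won (f : nat -> V) : Prop :=
  inf_play f /\ forall n, ~ gX GG (f n).

(* A vertex-labeled tree is represented by the set S of label sequences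
   of its nodes: the node with label path I :: s is represented by s.
   (Children of a node carry pairwise distinct labels in a strategy, so
   this representation is faithful.) *)
Definition is_strategy (S : seq V -> Prop) : Prop :=
  [/\ S [::],
      (forall s w, S (rcons s w) -> S s),
      (forall s w, S s -> S (rcons s w) -> gE GG (last (gI GG) s) w),
      (forall s, S s -> gV1 GG (last (gI GG) s) ->
         forall w, gE GG (last (gI GG) s) w -> S (rcons s w)) &
      (forall s, S s -> gV0 GG (last (gI GG) s) ->
         (exists w, gE GG (last (gI GG) s) w) ->
         exists w, gE GG (last (gI GG) s) w /\
                   forall w', S (rcons s w') <-> w' = w)].

Definition winning_strategy (S : seq V -> Prop) : Prop :=
  is_strategy S
  /\ (forall s, S s -> (forall w, ~ S (rcons s w)) -> fin_play_won s)
  /\ (forall f : nat -> V, f 0 = gI GG ->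
        (forall n, S (mkseq (fun i => f i.+1) n)) -> inf_play_won f).

Definition player0_wins : Prop := exists S, winning_strategy S.
End GraphGames.

(* The game Graph(G).  Vertices (M, None) stand for (M, T) (top).      *)
Section Graphs.
Variables (P T : finType) (G : petri_game P T).

Definition gvert := (marking P * option {set T})%type.

Definition Gr_V0 (v : gvert) : Prop := reachable G v.1 /\ v.2 = None.
Definition Gr_V1 (v : gvert) : Prop :=
  reachable G v.1 /\ exists c, v.2 = Some c /\ c \subset postS G v.1.

Definition Gr_E (v w : gvert) : Prop :=
  (Gr_V0 v \/ Gr_V1 v) /\ (Gr_V0 w \/ Gr_V1 w) /\
  [\/ (exists M c, [/\ v = (M, None), w = (M, Some c) & c \subset postS G M]),
      (exists M M' c t, [/\ v = (M, Some c), w = (M', Some c),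
                           purely_env G t, enabled G t M & M' = fire G M t]) |
      (exists M M' c t, [/\ v = (M, Some c), w = (M', None),
                           system_tr G t /\ t \in c, enabled G t M & M' = fire G M t])].

Definition Gr_X (v : gvert) : Prop :=
  Gr_V1 v /\ exists c, v.2 = Some c /\ bad_cond G v.1 c.

Definition Graph : graph_game gvert :=
  GraphGame Gr_V0 Gr_V1 (init_mk G, None) Gr_E Gr_X.

(* The game Graph'(G).  Vertices (M, None, R) stand for (M, T, R).     *)
Definition gvert' := (marking P * option {set T} * marking P)%type.

Definition Gr'_V0 (v : gvert') : Prop :=
  reachable G v.1.1 /\ v.1.2 = None /\ v.2 = sMset G v.1.1.
Definition Gr'_V1 (v : gvert') : Prop :=
  reachable G v.1.1 /\
  exists c, [/\ v.1.2 = Some c, c \subset postS G v.1.1,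
              (if sM G v.1.1 is Some s then 0 < v.2 s else false)
              & msubset v.2 v.1.1].

Definition Gr'_E (v w : gvert') : Prop :=
  (Gr'_V0 v \/ Gr'_V1 v) /\ (Gr'_V0 w \/ Gr'_V1 w) /\
  [\/ (exists M c, [/\ v = (M, None, sMset G M), w = (M, Some c, sMset G M)
                     & c \subset postS G M]),
      (exists M M' c R R' t, [/\ v = (M, Some c, R), w = (M', Some c, R'),
                           purely_env G t /\ enabled G t M, M' = fire G M t &
                           exists o, 0 < post G t o /\
                                     R' = madd (mdiff R (pre G t)) (msingle o)]) |
      (exists M M' c R t, [/\ v = (M, Some c, R), w = (M', None, sMset G M'),
                           [/\ system_tr G t, t \in c & enabled G t M], M' = fire G M t &
                           msubset R (pre G t)])].

Definition Gr'_X (v : gvert') : Prop :=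
  Gr'_V1 v /\ exists c, v.1.2 = Some c /\ bad_cond G v.1.1 c.

Definition Graph' : graph_game gvert' :=
  GraphGame Gr'_V0 Gr'_V1 (init_mk G, None, sMset G (init_mk G)) Gr'_E Gr'_X.
End Graphs.

(* Main.v *)
Require Import Defs.
From mathcomp Require Import all_boot.
From Stdlib Require Import Classical ClassicalEpsilon.
Set Implicit Arguments. Unset Strict Implicit.

Section Gen.
Variables (V : Type) (GG : graph_game V).

Lemma pref_closed (S : seq V -> Prop) : (forall s w, S (rcons s w) -> S s) ->
  forall v u, S (u ++ v) -> S u.
Proof.
move=> H2; elim/last_ind => [|v w IH] u; first by rewrite cats0.
rewrite -rcons_cat => /H2; exact: IH.
Qed.

Lemma take_closed (S : seq V -> Prop) : (forall s w, S (rcons s w) -> S s) ->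
  forall u k, S u -> S (take k u).
Proof. move=> H2 u k Hu; apply: (@pref_closed S H2 (drop k u)); by rewrite cat_take_drop. Qed.

Definition itg (nx : seq V -> V) (t : seq V) n := iter n (fun u => rcons u (nx u)) t.

Lemma itg_pref nx t n k : exists r, itg nx t (n + k) = itg nx t n ++ r.
Proof.
elim: k => [|k [r Hr]]; first by exists [::]; rewrite addn0 cats0.
exists (rcons r (nx (itg nx t (n + k)))).
by rewrite addnS /itg iterS -/(itg nx t (n + k)) Hr rcons_cat.
Qed.

Lemma itg_size nx t n : size (itg nx t n) = size t + n.
Proof. elim: n => [|n IH]; first by rewrite addn0. by rewrite /itg iterS size_rcons -/(itg nx t n) IH addnS. Qed.

Lemma win_nonbad S : winning_strategy GG S -> forall t, S t ->
  forall i, i <= size t -> ~ gX GG (nth (gI GG) (gI GG :: t) i).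
Proof.
move=> [Hst [Hfin Hinf]] t St i Hi Hbad; case: Hst => H1 H2 H3 H4 H5.
pose nx u := epsilon (inhabits (gI GG)) (fun w => S (rcons u w)).
have claim : forall r, S (t ++ r) -> S (rcons (t ++ r) (nx (t ++ r))).
  move=> r Sr; apply: (epsilon_spec (inhabits (gI GG)) (fun w => S (rcons (t ++ r) w))).
  apply: NNPP => Hno.
  have Hleaf : forall w, ~ S (rcons (t ++ r) w) by move=> w Sw; apply: Hno; exists w.
  have [_ Hw] := Hfin _ Sr Hleaf.
  apply: (Hw i); first by rewrite size_cat (leq_trans Hi) ?leq_addr.
  by rewrite -cat_cons nth_cat /= ltnS Hi.
have gS : forall n, S (itg nx t n).
  elim=> [|n IH] //.
  have [r Hr] := itg_pref nx t 0 n.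
  rewrite /= in Hr.
  rewrite /itg iterS -/(itg nx t n) Hr /itg /=.
  apply: claim; by rewrite -Hr.
pose f k := nth (gI GG) (gI GG :: itg nx t k) k.
have Hf : forall n, mkseq (fun i => f i.+1) n = take n (itg nx t n).
  move=> n; apply: (@eq_from_nth _ (gI GG)).
    by rewrite size_mkseq size_take itg_size; case: ltnP => // H; apply/eqP; rewrite eqn_leq H (leq_addl _ _).
  move=> j; rewrite size_mkseq => Hj.
  rewrite nth_mkseq // nth_take // /f /=.
  have [r Hr] := itg_pref nx t j.+1 (n - j.+1).
  rewrite subnKC // in Hr.
  by rewrite Hr nth_cat itg_size addnS ltnS leq_addl.
have [_ Hnb] := Hinf f erefl (fun n => eq_ind_r S (take_closed H2 n (gS n)) (Hf n)).
move: Hbad; case: i Hi => [|j] Hj; first by apply: Hnb 0.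
rewrite /= => Hb; apply: (Hnb j.+1); rewrite /f /=.
have [r Hr] := itg_pref nx t 0 j.+1.
by rewrite /= in Hr; rewrite Hr nth_cat Hj.
Qed.
End Gen.

Section Pth.
Variables (V : Type) (GG : graph_game V).
Definition Pth (s : seq V) := forall i, i < size s ->
  gE GG (nth (gI GG) (gI GG :: s) i) (nth (gI GG) s i).

Lemma Pth_rcons s w : Pth (rcons s w) <-> Pth s /\ gE GG (last (gI GG) s) w.
Proof.
rewrite /Pth size_rcons; split.
  move=> H; split.
    move=> i Hi; have := H i (ltnW Hi).
    by rewrite -rcons_cons !nth_rcons /= Hi ltnS (ltnW Hi).
  have := H (size s) (ltnSn _).
  rewrite -rcons_cons !nth_rcons /= ltnSn ltnn eqxx.
  by rewrite (last_nth (gI GG)) /=.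
move=> [H1 H2] i; rewrite ltnS leq_eqVlt => /orP [/eqP ->|Hi].
  rewrite -rcons_cons !nth_rcons /= ltnSn ltnn eqxx.
  by rewrite (last_nth (gI GG)) /= in H2.
by rewrite -rcons_cons !nth_rcons /= Hi ltnS (ltnW Hi); apply: H1.
Qed.
End Pth.

Section Main.
Variables (P T : finType) (G : petri_game P T).
Hypothesis osp : one_system_player G.

Definition pr (v : gvert' P T) : gvert P T := v.1.

Lemma V0pr v : Gr'_V0 G v -> Gr_V0 G (pr v).
Proof. by case=> [H1 [H2 _]]; split. Qed.
Lemma V1pr v : Gr'_V1 G v -> Gr_V1 G (pr v).
Proof. by case=> [H1 [c [H2 H3 _ _]]]; split=> //; exists c. Qed.
Lemma VVpr v : Gr'_V0 G v \/ Gr'_V1 G v -> Gr_V0 G (pr v) \/ Gr_V1 G (pr v).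
Proof. by case=> [/V0pr|/V1pr]; auto. Qed.

Lemma Epr v w : Gr'_E G v w -> Gr_E G (pr v) (pr w).
Proof.
case=> Hv [Hw H]; split; first exact: VVpr.
split; first exact: VVpr.
case: H => [[M [c [Ev Ew Hc]]]|[M [M' [c [R [R' [t [Ev Ew [Ht He] HM _]]]]]]]|[M [M' [c [R [t [Ev Ew [Hs Hin He] HM _]]]]]]].
- by apply: Or31; exists M, c; rewrite Ev Ew.
- by apply: Or32; exists M, M', c, t; rewrite Ev Ew.
- by apply: Or33; exists M, M', c, t; rewrite Ev Ew.
Qed.

Lemma Xpr v : Gr'_X G v -> Gr_X G (pr v).
Proof. by case=> /V1pr H [c [H1 H2]]; split=> //; exists c. Qed.

Lemma sM_some M : reachable G M -> exists s, sM G M = Some s.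
Proof.
move=> HM; have E := osp HM.
rewrite /sM; case: pickP => [s _|H]; first by exists s.
exfalso; rewrite big1 in E => // p Hp.
by move: (H p); rewrite Hp /= => /negbT; rewrite lt0n negbK => /eqP.
Qed.

Lemma msub_sMset M : msubset (sMset G M) M.
Proof.
apply/forallP=> p; rewrite /sMset ffunE.
case: eqP => // E; move: E; rewrite /sM; case: pickP => // q /andP [_ Hq] [<-].
exact: Hq.
Qed.

Definition S' (S : seq (gvert P T) -> Prop) (s : seq (gvert' P T)) :=
  S (map pr s) /\ Pth (Graph' G) s.

Lemma lastpr s : last (gI (Graph G)) (map pr s) = pr (last (gI (Graph' G)) s).
Proof. change (gI (Graph G)) with (pr (gI (Graph' G))); exact: last_map. Qed.

Lemma strat' S : is_strategy (Graph G) S -> is_strategy (Graph' G) (S' S).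
Proof.
case=> H1 H2 H3 H4 H5; split.
- by split=> // i.
- move=> s w [Hs /Pth_rcons [Hp _]]; split=> //.
  by apply: (H2 _ (pr w)); rewrite -map_rcons.
- by move=> s w _ [_ /Pth_rcons [_ He]].
- move=> s [Hs Hp] HV w He; split; last by apply/Pth_rcons.
  rewrite map_rcons; apply: H4 => //; first by rewrite lastpr; apply: V1pr.
  by rewrite lastpr; apply: Epr.
- move=> s [Hs Hp] HV _.
  have Hl := lastpr s.
  move: HV Hl; move Hv: (last _ s) => v HV Hl.
  case: HV => HM [HN HR].
  have Ev : v = (v.1.1, None, sMset G v.1.1) by rewrite -HN -HR -2!surjective_pairing.
  have [w [Hw Hu]] : exists w, gE (Graph G) (last (gI (Graph G)) (map pr s)) w /\
      forall w', S (rcons (map pr s) w') <-> w' = w.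
    apply: H5 => //; first by rewrite Hl; apply: V0pr.
    exists (v.1.1, Some set0); rewrite Hl /pr Ev /=.
    split; first by left.
    split; first by right; split=> //; exists set0; split=> //; apply: sub0set.
    by apply: Or31; exists v.1.1, set0; split=> //; apply: sub0set.
  have [c [Ew Hc]] : exists c, w = (v.1.1, Some c) /\ c \subset postS G v.1.1.
    move: Hw; rewrite Hl /pr Ev /=.
    case=> _ [_ [[M [c [[<-] -> Hc]]]|[M [M' [c [t [? [?]]]]]]|[M [M' [c [t [? [?]]]]]]]] //.
    by exists c.
  have [s0 Hs0] := sM_some HM.
  have Ew' : gE (Graph' G) v (v.1.1, Some c, sMset G v.1.1).
    split; first by left.
    split.
      right; split=> //; exists c; split=> //; last exact: msub_sMset.
      by rewrite Hs0 /sMset ffunE Hs0 eqxx.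
    by apply: Or31; exists v.1.1, c; split.
  exists (v.1.1, Some c, sMset G v.1.1); split => // w'; split.
    move=> [Hs' /Pth_rcons [_ He]].
    rewrite Hv in He.
    move: Hs'; rewrite map_rcons => /Hu.
    rewrite Ew.
    case: He => _ [_ [[M [c' [E1 -> Hc']]]|[M [M' [c' [R [R' [t [E1 _]]]]]]]|[M [M' [c' [R [t [E1 _]]]]]]]]; last first.
    + by rewrite E1 in HN.
    + by rewrite E1 in HN.
    rewrite Ev in E1; case: E1 => <- _ /=; by case=> ->.
  move=> ->; split; last by apply/Pth_rcons; rewrite Hv.
  by rewrite map_rcons Hu Ew.
Qed.
End Main.

Theorem theorem2 (P T : finType) (G : petri_game P T) :
  valid_transitions G ->
  one_system_player G ->
  bounded G ->
  player0_wins (Graph G) ->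
  player0_wins (Graph' G).
Proof.
move=> _ osp _ [S HS].
have Hst := strat' osp HS.1.
exists (S' G S); split => //; split.
- move=> s [Hs Hp] Hleaf; split; first split => //.
  + move=> w He. case: Hst => _ _ _ H4 H5.
    case: (He.1) => HV.
    * have [w0 [_ Hw0]] := H5 s (conj Hs Hp) HV (ex_intro _ w He).
      by apply: (Hleaf w0); apply/Hw0.
    * exact: (Hleaf w (H4 s (conj Hs Hp) HV w He)).
  + move=> i Hi /Xpr HX.
    apply: (win_nonbad HS Hs (i:=i)); first by rewrite size_map.
    have -> : nth (gI (Graph G)) (gI (Graph G) :: map (@pr P T) s) i
       = pr (nth (gI (Graph' G)) (gI (Graph' G) :: s) i).
      by apply: (nth_map (gI (Graph' G)) _ (@pr P T) (s := gI (Graph' G) :: s)); rewrite /= ltnS.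
    exact: HX.
- move=> f f0 Hf; split; first split => // n.
    have := (Hf n.+1).2 n; rewrite size_mkseq ltnSn => /(_ isT).
    rewrite nth_mkseq //; case: n {Hf} => [|k] /=; first by rewrite f0.
    by rewrite nth_mkseq.
  move=> n /Xpr HX.
  have Hw := (HS.2.2 (fun k => pr (f k))).
  apply: ((Hw _ _).2 n HX); first by rewrite /= f0.
  move=> m; have -> : mkseq (fun i => pr (f i.+1)) m = map (@pr P T) (mkseq (fun i => f i.+1) m) by rewrite /mkseq -map_comp.
  exact: (Hf m).1.
Qed.
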